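(* Let $\alpha\in\mathbb R$ and consider the system $$\frac{d}{dt}v_n=-n^2v_n+\alpha v_n-2v_n\|v\|_H^2+v_n|v_n|^2,\quad n\in\mathbb Z,$$ for $v=\sum_nv_ne_n\in H$. The set $\mathcal R$ of its equilibria consists of $v=0$ and of those $v\ne0$ whose nonzero components satisfy the following: with $N_0:=\#\{n:v_n\ne0\}$ and $N_2:=\sum_{n:v_n\ne0}n^2$, $$\|v\|_H^2=\frac{N_0}{2N_0-1}\alpha-\frac{N_2}{2N_0-1}>0,\qquad |v_n|^2=n^2+\frac{\alpha-2N_2}{2N_0-1}>0\ \text{ for } v_n\ne0;$$ and every sequence $(v_n)$ satisfying these conditions gives an equilibrium. Moreover, a nonzero equilibrium $v$ is not hyperbolic if and only if $k^2+\frac{\alpha-2N_2}{2N_0-1}=0$ for some $k$ with $v_k=0$. The zero equilibrium is hyperbolic if and only if $\alpha\ne k^2$ for all $k\in\mathbb Z$. In particular, all equilibria are hyperbolic if $\alpha\notin\mathbb Z$.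
   Context: $e_n=e^{inx}$, $H=L^2_{per}(-\pi,\pi)$ complex-valued with $\|v\|_H^2=\sum|v_n|^2$. The system is invariant under $v_n\mapsto e^{i\phi_n}v_n$ ($\phi_n\in\mathbb R$), so each equilibrium generates a torus of equilibria and can be rotated to a real equilibrium (all $v_n\in\mathbb R$); the real subspace $\{v_n\in\mathbb R\ \forall n\}$ is invariant. Hyperbolicity of an equilibrium $v$ (normal hyperbolicity of its torus) is understood via the real system: for a real equilibrium $v$, the linearization on real perturbations $\theta$ is $\frac d{dt}\theta_n=-n^2\theta_n+\alpha\theta_n-2\theta_n\|v\|_H^2-4v_n(v,\theta)+3\theta_nv_n^2$, and $v$ is hyperbolic iff this linear operator has no zero eigenvalue (nontrivial kernel). *)

(* Defs.v *)
From Stdlib Require Import Reals ZArith List.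
From Coquelicot Require Import Coquelicot.
Import ListNotations.
Open Scope R_scope.

(* Sequences indexed by Z: v = sum_n v_n e_n, e_n = e^{inx}. *)

Definition in_H (v : Z -> C) : Prop :=
  ex_series (fun k : nat => (Cmod (v (Z.of_nat k)))^2) /\
  ex_series (fun k : nat => (Cmod (v (- Z.of_nat (S k))%Z))^2).

Definition normH2 (v : Z -> C) : R :=
  Series (fun k : nat => (Cmod (v (Z.of_nat k)))^2) +
  Series (fun k : nat => (Cmod (v (- Z.of_nat (S k))%Z))^2).

Definition is_equilibrium (alpha : R) (v : Z -> C) : Prop :=
  in_H v /\
  forall n : Z,
    (RtoC (- (IZR n)^2) * v n + RtoC alpha * v n
     - RtoC 2 * v n * RtoC (normH2 v)
     + v n * RtoC ((Cmod (v n))^2))%C = 0%C.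

Definition in_Hr (w : Z -> R) : Prop := in_H (fun n => RtoC (w n)).
Definition normH2r (w : Z -> R) : R := normH2 (fun n => RtoC (w n)).
Definition ipr (w th : Z -> R) : R :=
  Series (fun k : nat => w (Z.of_nat k) * th (Z.of_nat k)) +
  Series (fun k : nat => w (- Z.of_nat (S k))%Z * th (- Z.of_nat (S k))%Z).

(* Linearization at a real equilibrium w, applied to a real perturbation th:
   (L th)_n = -n^2 th_n + alpha th_n - 2 th_n ||w||^2 - 4 w_n (w,th) + 3 th_n w_n^2 *)
Definition lin_op (alpha : R) (w th : Z -> R) (n : Z) : R :=
  - (IZR n)^2 * th n + alpha * th n - 2 * th n * normH2r w
  - 4 * w n * ipr w th + 3 * th n * (w n)^2.

Definition hyperbolic_real (alpha : R) (w : Z -> R) : Prop :=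
  ~ (exists th : Z -> R,
        in_Hr th /\ (exists n, th n <> 0) /\ forall n, lin_op alpha w th n = 0).

(* A (complex) equilibrium is hyperbolic iff its rotation to a real
   equilibrium (here: n |-> |v_n|) is hyperbolic. *)
Definition hyperbolic (alpha : R) (v : Z -> C) : Prop :=
  hyperbolic_real alpha (fun n => Cmod (v n)).

Definition support_list (v : Z -> C) (S : list Z) : Prop :=
  NoDup S /\ forall n : Z, v n <> 0%C <-> In n S.

Definition Nzero (S : list Z) : R := INR (length S).
Definition Ntwo (S : list Z) : R := fold_right (fun n acc => (IZR n)^2 + acc) 0 S.

Definition zero_seq : Z -> C := fun _ => 0%C.

(* Main.v *)
Require Import Defs.
From Stdlib Require Import Reals ZArith List.
From Coquelicot Require Import Coquelicot.
Import ListNotations.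
Open Scope R_scope.
From Stdlib Require Import Reals ZArith List Lia Lra Psatz Classical FunctionalExtensionality.
From Coquelicot Require Import Coquelicot.
Import ListNotations.
Open Scope R_scope.

Definition fsum (g : Z -> R) (S : list Z) : R := fold_right (fun n acc => g n + acc) 0 S.
Definition ZS (g : Z -> R) : R :=
  Series (fun k : nat => g (Z.of_nat k)) + Series (fun k : nat => g (- Z.of_nat (S k))%Z).
Definition exZS (g : Z -> R) : Prop :=
  ex_series (fun k : nat => g (Z.of_nat k)) /\ ex_series (fun k : nat => g (- Z.of_nat (S k))%Z).

Lemma is_series_zero : forall a : nat -> R, (forall k, a k = 0) -> is_series a 0.
Proof.
  intros a Ha. cut (is_lim_seq (sum_n a) 0). intro H; exact H.
  apply (is_lim_seq_ext_loc (fun _ => 0)).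
  - exists O. intros N _. rewrite sum_n_Reals. induction N; simpl; rewrite ?IHN, Ha; ring.
  - apply is_lim_seq_const.
Qed.

Lemma is_series_delta : forall (j : nat) (c : R) (a : nat -> R),
  (forall k, a k = if Nat.eq_dec k j then c else 0) -> is_series a c.
Proof.
  intros j c a Ha. cut (is_lim_seq (sum_n a) c). intro H; exact H.
  apply (is_lim_seq_ext_loc (fun _ => c)).
  - exists j. intros N HN. rewrite sum_n_Reals.
    assert (H0 : forall M, (M < j)%nat -> sum_f_R0 a M = 0).
    { induction M; intros HM; simpl; rewrite Ha; destruct Nat.eq_dec; try lia.
      - ring. - rewrite IHM by lia. ring. }
    induction HN.
    + destruct j; simpl; rewrite Ha; destruct Nat.eq_dec; try lia.
      ring. rewrite H0 by lia. ring.
    + simpl. rewrite <- IHHN, Ha. destruct Nat.eq_dec; try lia. ring.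
  - apply is_lim_seq_const.
Qed.

Lemma ZS_delta : forall (a : Z) (g : Z -> R), (forall n, n <> a -> g n = 0) ->
  exZS g /\ ZS g = g a.
Proof.
  intros a g Hg. unfold exZS, ZS.
  destruct (Z_lt_le_dec a 0) as [Hn|Hp].
  - assert (H1 : is_series (fun k : nat => g (Z.of_nat k)) 0).
    { apply is_series_zero. intros k. apply Hg. lia. }
    assert (H2 : is_series (fun k : nat => g (- Z.of_nat (S k))%Z) (g a)).
    { apply (is_series_delta (Z.to_nat (- a - 1))). intros k.
      destruct Nat.eq_dec. f_equal. lia. apply Hg. lia. }
    repeat split; try (eexists; eassumption).
    rewrite (is_series_unique _ _ H1), (is_series_unique _ _ H2). ring.
  - assert (H1 : is_series (fun k : nat => g (Z.of_nat k)) (g a)).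
    { apply (is_series_delta (Z.to_nat a)). intros k.
      destruct Nat.eq_dec. f_equal. lia. apply Hg. lia. }
    assert (H2 : is_series (fun k : nat => g (- Z.of_nat (S k))%Z) 0).
    { apply is_series_zero. intros k. apply Hg. lia. }
    repeat split; try (eexists; eassumption).
    rewrite (is_series_unique _ _ H1), (is_series_unique _ _ H2). ring.
Qed.

Lemma fsum_ext_in : forall S g h, (forall n, In n S -> g n = h n) -> fsum g S = fsum h S.
Proof.
  induction S; intros g h H; simpl; auto.
  rewrite (H a) by (left; auto). rewrite (IHS g h) by (intros; apply H; right; auto). auto.
Qed.

Lemma fin_supp : forall L g, NoDup L -> (forall n, ~ In n L -> g n = 0) ->
  exZS g /\ ZS g = fsum g L.
Proof.
  induction L as [|a L IH]; intros g HND Hg.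
  - assert (H1 := is_series_zero (fun k : nat => g (Z.of_nat k)) (fun k => Hg _ (fun H => H))).
    assert (H2 := is_series_zero (fun k : nat => g (- Z.of_nat (S k))%Z) (fun k => Hg _ (fun H => H))).
    unfold exZS, ZS. repeat split; try (eexists; eassumption).
    rewrite (is_series_unique _ _ H1), (is_series_unique _ _ H2). simpl; ring.
  - inversion HND as [|? ? Hna HND']; subst.
    set (g1 := fun n => if Z.eq_dec n a then g n else 0).
    set (g2 := fun n => if Z.eq_dec n a then 0 else g n).
    destruct (ZS_delta a g1) as [[E1 E2] Z1].
    { intros n Hn. unfold g1. destruct Z.eq_dec; tauto. }
    destruct (IH g2 HND') as [[F1 F2] Z2].
    { intros n Hn. unfold g2. destruct Z.eq_dec; auto. apply Hg. simpl. intros [H|H]; auto. }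
    assert (Hsplit : forall n, g n = g1 n + g2 n).
    { intros n. unfold g1, g2. destruct Z.eq_dec; ring. }
    unfold exZS, ZS in *.
    assert (P1 := ex_series_plus _ _ E1 F1). assert (P2 := ex_series_plus _ _ E2 F2).
    split; [split|].
    + eapply ex_series_ext; [|exact P1]. intros; simpl. unfold plus; simpl. rewrite <- Hsplit. auto.
    + eapply ex_series_ext; [|exact P2]. intros; simpl. unfold plus; simpl. rewrite <- Hsplit. auto.
    + rewrite (Series_ext _ _ (fun k => Hsplit (Z.of_nat k))).
      rewrite (Series_ext _ _ (fun k => Hsplit (- Z.of_nat (S k))%Z)).
      rewrite !Series_plus by assumption.
      change (fsum g (a::L)) with (g a + fsum g L). replace (g a + fsum g L) with (g1 a + fsum g2 L).
      rewrite <- Z1, <- Z2. ring.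
      f_equal. unfold g1. destruct Z.eq_dec; tauto.
      apply fsum_ext_in. intros n Hn. unfold g2. destruct Z.eq_dec; auto. subst; tauto.
Qed.

Lemma cexpr : forall (a b c d : R) (z : C),
  (RtoC a * z + RtoC b * z - RtoC 2 * z * RtoC c + z * RtoC d = z * RtoC (a + b - 2*c + d))%C.
Proof.
  intros a b c d [x y]. unfold RtoC, Cmult, Cplus, Cminus, Copp; simpl. f_equal; ring.
Qed.

Lemma cmul_real0 : forall (z : C) (r : R), z <> 0%C -> (z * RtoC r)%C = 0%C -> r = 0.
Proof.
  intros z r Hz H. apply Cmod_gt_0 in Hz.
  assert (H2 : Cmod (z * RtoC r) = 0) by (rewrite H; apply Cmod_0).
  rewrite Cmod_mult, Cmod_R in H2.
  destruct (Rmult_integral _ _ H2) as [H3|H3]. lra.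
  destruct (Req_dec r 0); auto. apply Rabs_no_R0 in H0. contradiction.
Qed.

Lemma fsum_sq_const : forall (S : list Z) K,
  fsum (fun n => IZR n ^ 2 + K) S = Ntwo S + Nzero S * K.
Proof.
  induction S as [|a L IH]; intros K. unfold Nzero, Ntwo, fsum; simpl. ring.
  unfold Nzero, Ntwo, fsum in *. cbn [fold_right length]. rewrite IH, S_INR. ring.
Qed.

Lemma fsum_const : forall (S : list Z) K, fsum (fun _ => K) S = Nzero S * K.
Proof.
  induction S as [|a L IH]; intros K. unfold Nzero, Ntwo, fsum; simpl. ring.
  unfold Nzero, Ntwo, fsum in *. cbn [fold_right length]. rewrite IH, S_INR. ring.
Qed.

Lemma fsum_pos : forall (S : list Z) g, S <> [] -> (forall n, In n S -> g n > 0) -> fsum g S > 0.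
Proof.
  induction S as [|a S IH]; intros g HS Hg. congruence.
  simpl. destruct S as [|b S'].
  - simpl. assert (g a > 0) by (apply Hg; left; auto). lra.
  - assert (g a > 0) by (apply Hg; left; auto).
    assert (fsum g (b :: S') > 0). { apply IH. congruence. intros; apply Hg; right; auto. }
    lra.
Qed.

Lemma Nzero_ge1 : forall S, S <> [] -> Nzero S >= 1.
Proof.
  intros S HS. destruct S. congruence. unfold Nzero; simpl length. rewrite S_INR.
  assert (0 <= INR (length S)) by apply pos_INR. lra.
Qed.

Lemma div_solve : forall x y d, d <> 0 -> x * d = y -> x = y / d.
Proof. intros; subst; field; auto. Qed.

Lemma supp_zero : forall v S, support_list v S -> forall n, ~ In n S -> v n = 0%C.
Proof.
  intros v S [_ H] n Hn. apply NNPP. intro Hv. apply Hn, H, Hv.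
Qed.

Lemma eq_facts : forall alpha v S,
  is_equilibrium alpha v -> support_list v S -> S <> [] ->
  normH2 v = fsum (fun n => Cmod (v n) ^ 2) S /\
  normH2 v = Nzero S / (2 * Nzero S - 1) * alpha - Ntwo S / (2 * Nzero S - 1) /\
  normH2 v > 0 /\
  (forall n, In n S ->
     (Cmod (v n))^2 = (IZR n)^2 + (alpha - 2 * Ntwo S) / (2 * Nzero S - 1) /\
     (IZR n)^2 + (alpha - 2 * Ntwo S) / (2 * Nzero S - 1) > 0).
Proof.
  intros alpha v S [HH Heq] HS HSne.
  assert (HN := Nzero_ge1 S HSne).
  destruct (fin_supp S (fun n => Cmod (v n) ^ 2)) as [_ HZ].
  { apply HS. }
  { intros n Hn. rewrite (supp_zero v S HS n Hn), Cmod_0. ring. }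
  change (ZS (fun n => Cmod (v n) ^ 2)) with (normH2 v) in HZ.
  set (N := normH2 v) in *.
  assert (Hm : forall n, In n S -> Cmod (v n) ^ 2 = IZR n ^ 2 + (- alpha + 2 * N)).
  { intros n Hn. assert (Hv : v n <> 0%C) by (apply HS; auto).
    assert (E := Heq n). rewrite cexpr in E. apply cmul_real0 in E; auto. lra. }
  assert (HN2 : N = Ntwo S + Nzero S * (- alpha + 2 * N)).
  { transitivity (fsum (fun n => Cmod (v n)^2) S); [exact HZ|].
    rewrite <- fsum_sq_const. apply fsum_ext_in. auto. }
  assert (HNf : N = Nzero S / (2 * Nzero S - 1) * alpha - Ntwo S / (2 * Nzero S - 1)).
  { replace (Nzero S / (2 * Nzero S - 1) * alpha - Ntwo S / (2 * Nzero S - 1))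
      with ((Nzero S * alpha - Ntwo S) / (2 * Nzero S - 1)) by (field; lra).
    apply div_solve. lra. nra. }
  split; [auto|split; [auto|split]].
  - rewrite HZ. apply fsum_pos; auto. intros n Hn.
    assert (Hv : v n <> 0%C) by (apply HS; auto). apply Cmod_gt_0 in Hv.
    apply pow_lt; auto.
  - intros n Hn.
    assert (Hv : v n <> 0%C) by (apply HS; auto). apply Cmod_gt_0 in Hv.
    assert (E : Cmod (v n) ^ 2 = IZR n ^ 2 + (alpha - 2 * Ntwo S) / (2 * Nzero S - 1)).
    { rewrite Hm; auto. rewrite HNf. field. lra. }
    split; auto. rewrite <- E. apply pow_lt; auto.
Qed.

Lemma eventually_small : forall a : nat -> R, ex_series a ->
  exists N : nat, forall k, (N <= k)%nat -> Rabs (a k) < 1.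
Proof.
  intros a Ha. apply ex_series_lim_0 in Ha. apply is_lim_seq_spec in Ha.
  destruct (Ha (mkposreal 1 Rlt_0_1)) as [N HN]. exists N. intros k Hk.
  specialize (HN k Hk). simpl in HN. rewrite Rminus_0_r in HN. exact HN.
Qed.

Lemma finite_support : forall alpha v, is_equilibrium alpha v ->
  exists B : nat, forall n, v n <> 0%C -> (Z.abs n <= Z.of_nat B)%Z.
Proof.
  intros alpha v [[H1 H2] Heq].
  destruct (eventually_small _ H1) as [N1 HN1].
  destruct (eventually_small _ H2) as [N2 HN2].
  set (K := - alpha + 2 * normH2 v).
  destruct (INR_unbounded (Rabs K + 1)) as [M HM].
  exists (Nat.max (Nat.max N1 N2) M). intros n Hv.
  destruct (Z_le_gt_dec (Z.abs n) (Z.of_nat (Nat.max (Nat.max N1 N2) M))) as [Hle|Hgt]; auto.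
  exfalso.
  assert (Hm : Cmod (v n) ^ 2 = IZR n ^ 2 + K).
  { assert (E := Heq n). rewrite cexpr in E. apply cmul_real0 in E; auto. unfold K. lra. }
  assert (Hsq : IZR n ^ 2 >= IZR (Z.abs n)).
  { replace (IZR n ^ 2) with (IZR (n * n)) by (rewrite mult_IZR; ring).
    apply Rle_ge, IZR_le. nia. }
  assert (HMn : IZR (Z.abs n) >= INR M).
  { rewrite INR_IZR_INZ. apply Rle_ge, IZR_le. lia. }
  assert (Hbig : Cmod (v n) ^ 2 > 1).
  { rewrite Hm. assert (HK := Rle_abs (- K)). rewrite Rabs_Ropp in HK.
    lra. }
  assert (Hpos : 0 <= Cmod (v n) ^ 2) by (apply pow2_ge_0).
  destruct (Z_le_gt_dec 0 n) as [Hn|Hn].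
  - assert (E : n = Z.of_nat (Z.to_nat n)) by lia.
    specialize (HN1 (Z.to_nat n)). rewrite <- E in HN1.
    rewrite Rabs_pos_eq in HN1 by auto. assert (Cmod (v n) ^ 2 < 1) by (apply HN1; lia). lra.
  - assert (E : n = (- Z.of_nat (S (Z.to_nat (- n - 1))))%Z) by lia.
    specialize (HN2 (Z.to_nat (- n - 1))). rewrite <- E in HN2.
    rewrite Rabs_pos_eq in HN2 by auto. assert (Cmod (v n) ^ 2 < 1) by (apply HN2; lia). lra.
Qed.

Lemma exists_support : forall alpha v, is_equilibrium alpha v ->
  exists S, support_list v S.
Proof.
  intros alpha v He. destruct (finite_support alpha v He) as [B HB].
  set (f := fun n => if Req_EM_T (Cmod (v n)) 0 then false else true).
  exists (filter f (map (fun k => Z.of_nat k - Z.of_nat B)%Z (seq 0 (2 * B + 1)))).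
  split.
  - apply NoDup_filter. apply NoDup_map_NoDup_ForallPairs.
    + intros x y _ _ Hxy. lia.
    + apply seq_NoDup.
  - intros n. rewrite filter_In, in_map_iff. split.
    + intros Hv. split.
      * exists (Z.to_nat (n + Z.of_nat B)). specialize (HB n Hv). split. lia.
        apply in_seq. lia.
      * unfold f. destruct Req_EM_T as [e|e]; auto. apply Cmod_eq_0 in e. contradiction.
    + intros [_ Hf] Hv. unfold f in Hf. rewrite Hv in Hf. rewrite Cmod_0 in Hf.
      destruct Req_EM_T; congruence.
Qed.

Lemma part1 : forall alpha v,
     is_equilibrium alpha v <->
     (v = zero_seq \/
      exists S : list Z,
        support_list v S /\ S <> [] /\
        normH2 v = Nzero S / (2 * Nzero S - 1) * alpha - Ntwo S / (2 * Nzero S - 1) /\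
        normH2 v > 0 /\
        (forall n, In n S ->
           (Cmod (v n))^2 = (IZR n)^2 + (alpha - 2 * Ntwo S) / (2 * Nzero S - 1) /\
           (IZR n)^2 + (alpha - 2 * Ntwo S) / (2 * Nzero S - 1) > 0)).
Proof.
  intros alpha v. split.
  - intros He. destruct (exists_support alpha v He) as [S HS].
    destruct S as [|a L].
    + left. apply functional_extensionality. intros n. apply (supp_zero v [] HS n). auto.
    + right. exists (a :: L).
      assert (Hne : a :: L <> []) by congruence.
      destruct (eq_facts alpha v (a :: L) He HS Hne) as [_ [F1 [F2 F3]]].
      auto.
  - intros [Hz | [S [HS [Hne [HN [Hpos Hn]]]]]].
    + subst v. split.
      * destruct (fin_supp [] (fun n => Cmod (zero_seq n) ^ 2)) as [HE _].
        constructor. intros n _. unfold zero_seq. rewrite Cmod_0. ring.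
        exact HE.
      * intros n. unfold zero_seq. ring.
    + split.
      * destruct (fin_supp S (fun n => Cmod (v n) ^ 2)) as [HE _].
        apply HS. intros n Hn'. rewrite (supp_zero v S HS n Hn'), Cmod_0. ring.
        exact HE.
      * intros n. destruct (classic (In n S)) as [Hin|Hin].
        -- rewrite cexpr. destruct (Hn n Hin) as [Hm _].
           assert (HN1 := Nzero_ge1 S Hne).
           replace (- IZR n ^ 2 + alpha - 2 * normH2 v + Cmod (v n) ^ 2) with 0.
           ring. rewrite Hm, HN. field. lra.
        -- rewrite (supp_zero v S HS n Hin). ring.
Qed.

Lemma normH2r_mod : forall v, normH2r (fun n => Cmod (v n)) = normH2 v.
Proof.
  intros v. unfold normH2r, normH2. f_equal; apply Series_ext; intros k;
  rewrite Cmod_R, Rabs_pos_eq by apply Cmod_ge_0; auto.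
Qed.

Definition delta (k : Z) : Z -> R := fun n => if Z.eq_dec n k then 1 else 0.

Lemma delta_in_H : forall k, in_Hr (delta k).
Proof.
  intros k. destruct (ZS_delta k (fun n => Cmod (RtoC (delta k n)) ^ 2)) as [H _].
  intros n Hn. unfold delta. destruct Z.eq_dec; try contradiction. rewrite Cmod_0. ring.
  exact H.
Qed.

Lemma ipr_zero : forall w th, (forall n, w n * th n = 0) -> ipr w th = 0.
Proof.
  intros w th H. destruct (fin_supp [] (fun n => w n * th n)) as [_ HZ].
  constructor. intros; auto. exact HZ.
Qed.

Lemma part2 : forall alpha (v : Z -> C) (S : list Z),
     is_equilibrium alpha v -> support_list v S -> S <> [] ->
     (~ hyperbolic alpha v <->
      exists k : Z, v k = 0%C /\
        (IZR k)^2 + (alpha - 2 * Ntwo S) / (2 * Nzero S - 1) = 0).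
Proof.
  intros alpha v S He HS Hne.
  destruct (eq_facts alpha v S He HS Hne) as [_ [HN [_ Hn]]].
  assert (HN1 := Nzero_ge1 S Hne).
  unfold hyperbolic, hyperbolic_real. unfold lin_op. rewrite normH2r_mod.
  set (w := fun n => Cmod (v n)).
  split.
  - intros Hh. apply NNPP in Hh. destruct Hh as [th [Hth [[n0 Hn0] HL]]].
    set (p := ipr w th) in *.
    destruct (fin_supp S (fun n => w n * th n)) as [_ HZ].
    { apply HS. }
    { intros n Hn'. unfold w. rewrite (supp_zero v S HS n Hn'), Cmod_0. ring. }
    change (ZS (fun n => w n * th n)) with p in HZ.
    assert (Hwt : forall m, In m S -> w m * th m = 2 * p).
    { intros m Hm. destruct (Hn m Hm) as [Hm2 _].
      assert (Hwp : w m > 0) by (apply Cmod_gt_0, HS; auto).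
      assert (Hkey : - IZR m ^ 2 + alpha - 2 * normH2 v = - w m ^ 2).
      { unfold w. rewrite Hm2, HN. field. lra. }
      specialize (HL m). change (Cmod (v m)) with (w m) in HL.
      assert (Hk2 : th m * (- IZR m ^ 2 + alpha - 2 * normH2 v) = th m * (- w m ^ 2)) by (rewrite Hkey; auto).
      assert (E : w m * (w m * th m - 2 * p) = 0) by nra.
      apply Rmult_integral in E. destruct E; lra. }
    assert (Hp : p = 0).
    { assert (E : p = Nzero S * (2 * p)).
      { transitivity (fsum (fun n => w n * th n) S); [exact HZ|].
        rewrite <- fsum_const. apply fsum_ext_in. auto. }
      nra. }
    exists n0.
    assert (Hnot : ~ In n0 S).
    { intros Hin. assert (Hwp : w n0 > 0) by (apply Cmod_gt_0, HS; auto).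
      specialize (Hwt n0 Hin). rewrite Hp, Rmult_0_r in Hwt.
      apply Rmult_integral in Hwt. destruct Hwt; lra. }
    assert (Hv0 := supp_zero v S HS n0 Hnot). split; auto.
    specialize (HL n0). rewrite Hv0, Cmod_0 in HL.
    assert (E : th n0 * (- IZR n0 ^ 2 + alpha - 2 * normH2 v) = 0) by nra.
    apply Rmult_integral in E. destruct E as [E|E]; [contradiction|].
    rewrite HN in E. replace (IZR n0 ^ 2 + (alpha - 2 * Ntwo S) / (2 * Nzero S - 1))
      with (- (- IZR n0 ^ 2 + alpha - 2 * (Nzero S / (2 * Nzero S - 1) * alpha - Ntwo S / (2 * Nzero S - 1))))
      by (field; lra).
    rewrite E. ring.
  - intros [k [Hk Hc]] Hh. apply Hh. exists (delta k). split; [apply delta_in_H|split].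
    + exists k. unfold delta. destruct Z.eq_dec; try congruence. lra.
    + intros n. rewrite ipr_zero.
      2:{ intros m. unfold delta, w. destruct Z.eq_dec. subst. rewrite Hk, Cmod_0. ring. ring. }
      unfold delta. destruct Z.eq_dec.
      * subst n. unfold w. rewrite Hk, Cmod_0. rewrite HN.
        transitivity (- (IZR k ^ 2 + (alpha - 2 * Ntwo S) / (2 * Nzero S - 1))).
        field. lra. rewrite Hc. ring.
      * ring.
Qed.

Lemma part3 : forall alpha, hyperbolic alpha zero_seq <-> forall k : Z, alpha <> (IZR k)^2.
Proof.
  intros alpha. unfold hyperbolic, hyperbolic_real, lin_op. rewrite normH2r_mod.
  assert (HN : normH2 zero_seq = 0).
  { destruct (fin_supp [] (fun n => Cmod (zero_seq n) ^ 2)) as [_ HZ].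
    constructor. intros n _. unfold zero_seq. rewrite Cmod_0. ring. exact HZ. }
  rewrite HN. unfold zero_seq. rewrite Cmod_0.
  split.
  - intros Hh k Hk. apply Hh. exists (delta k). split; [apply delta_in_H|split].
    + exists k. unfold delta. destruct Z.eq_dec; try congruence. lra.
    + intros n. unfold delta. destruct Z.eq_dec. subst n. rewrite Hk. ring. ring.
  - intros H [th [_ [[n0 Hn0] HL]]]. specialize (HL n0).
    assert (E : th n0 * (alpha - IZR n0 ^ 2) = 0) by nra.
    apply Rmult_integral in E. destruct E as [E|E]. contradiction.
    apply (H n0). lra.
Qed.

Lemma Ntwo_IZR : forall S, Ntwo S = IZR (fold_right (fun n acc => n * n + acc)%Z 0%Z S).
Proof.
  induction S as [|a L IH]. reflexivity.
  unfold Ntwo in *. cbn [fold_right]. rewrite IH, plus_IZR, mult_IZR. ring.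
Qed.

Lemma part4 : forall alpha, (forall k : Z, alpha <> IZR k) ->
     forall v : Z -> C, is_equilibrium alpha v -> hyperbolic alpha v.
Proof.
  intros alpha Ha v He.
  destruct (proj1 (part1 alpha v) He) as [Hz | [S [HS [Hne _]]]].
  - subst v. apply part3. intros k Hk. apply (Ha (k * k)%Z). rewrite mult_IZR, Hk. ring.
  - apply NNPP. intros Hh. apply (part2 alpha v S He HS Hne) in Hh.
    destruct Hh as [k [_ Hk]].
    assert (HN1 := Nzero_ge1 S Hne).
    assert (E : alpha = 2 * Ntwo S - (2 * Nzero S - 1) * IZR k ^ 2).
    { assert (E2 : alpha - 2 * Ntwo S = ((alpha - 2 * Ntwo S) / (2 * Nzero S - 1)) * (2 * Nzero S - 1))
        by (field; lra).
      assert (E3 : (alpha - 2 * Ntwo S) / (2 * Nzero S - 1) = - IZR k ^ 2) by lra.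
      rewrite E3 in E2. lra. }
    apply (Ha (2 * fold_right (fun n acc => n * n + acc)%Z 0%Z S
               - (2 * Z.of_nat (length S) - 1) * (k * k))%Z).
    rewrite E, Ntwo_IZR. unfold Nzero. rewrite INR_IZR_INZ.
    rewrite minus_IZR, !mult_IZR, minus_IZR, mult_IZR. simpl (IZR 2). simpl (IZR 1). ring.
Qed.
Theorem lemma5p1 (alpha : R) :
  (* characterization of the set of equilibria *)
  (forall v : Z -> C,
     is_equilibrium alpha v <->
     (v = zero_seq \/
      exists S : list Z,
        support_list v S /\ S <> [] /\
        normH2 v = Nzero S / (2 * Nzero S - 1) * alpha - Ntwo S / (2 * Nzero S - 1) /\
        normH2 v > 0 /\
        (forall n, In n S ->
           (Cmod (v n))^2 = (IZR n)^2 + (alpha - 2 * Ntwo S) / (2 * Nzero S - 1) /\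
           (IZR n)^2 + (alpha - 2 * Ntwo S) / (2 * Nzero S - 1) > 0))) /\
  (* non-hyperbolicity of nonzero equilibria *)
  (forall (v : Z -> C) (S : list Z),
     is_equilibrium alpha v -> support_list v S -> S <> [] ->
     (~ hyperbolic alpha v <->
      exists k : Z, v k = 0%C /\
        (IZR k)^2 + (alpha - 2 * Ntwo S) / (2 * Nzero S - 1) = 0)) /\
  (* the zero equilibrium *)
  (hyperbolic alpha zero_seq <-> forall k : Z, alpha <> (IZR k)^2) /\
  (* in particular *)
  ((forall k : Z, alpha <> IZR k) ->
     forall v : Z -> C, is_equilibrium alpha v -> hyperbolic alpha v).
Proof.
  intros; split; [apply part1|split; [apply part2|split; [apply part3|apply part4]]].
Qed.
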